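(* For $k\in\mathbb{N}$ let $A(k)=\dfrac{3^{2k+3}-32k^3-96k^2-88k-27}{4\,(2k+3)!}$. (i) For every $x\in(0,\pi/2)$ and every $n\in\mathbb{N}$, $$\sum_{k=2}^{2n}(-1)^{k+1}A(k)\,x^{2k}<\cos x-\Big(\frac{\sin x}{x}\Big)^{3}<\sum_{k=2}^{2n+1}(-1)^{k+1}A(k)\,x^{2k}.$$ (ii) For every $x\in(0,\pi/2)$ and every $m\in\mathbb{N}$, $$\Big|\cos x-\Big(\frac{\sin x}{x}\Big)^{3}-\sum_{k=1}^{m}(-1)^{k+1}A(k)\,x^{2k}\Big|<A(m+1)\,x^{2m+2}.$$
   Context: $\mathbb{N}=\{1,2,3,\dots\}$. *)

(* Defs.v *)
From Stdlib Require Import Reals Lra Lia Arith Factorial.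
Open Scope R_scope.

Definition A (k : nat) : R :=
  (3 ^ (2 * k + 3) - 32 * INR k ^ 3 - 96 * INR k ^ 2 - 88 * INR k - 27)
  / (4 * INR (fact (2 * k + 3))).

Definition term (k : nat) (x : R) : R := (-1) ^ (k + 1) * A k * x ^ (2 * k).

(* psum a b x = sum_{k=a}^{b} term k x  (empty, i.e. 0, if b < a) *)
Fixpoint psum (a b : nat) (x : R) : R :=
  match b with
  | O => if (a <=? 0)%nat then term 0 x else 0
  | S b' => psum a b' x + (if (a <=? S b')%nat then term (S b') x else 0)
  end.

Definition F (x : R) : R := cos x - (sin x / x) ^ 3.

(* Main.v *)
Require Import Defs.
From Stdlib Require Import Reals Lra Lia Arith Factorial.
Open Scope R_scope.

Lemma sin3 : forall y, sin (3*y) = 3 * sin y - 4 * sin y ^ 3.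
Proof.
  intro y. replace (3*y) with (2*y + y) by ring.
  rewrite sin_plus, sin_2a, cos_2a_sin.
  pose proof (sin2 y) as H. unfold Rsqr in H.
  assert (Hc: cos y * cos y = 1 - sin y * sin y) by lra.
  replace (2 * sin y * cos y * cos y) with (2*sin y*(cos y*cos y)) by ring.
  rewrite Hc; ring.
Qed.

Lemma fact3 : forall k, INR (fact (2*k+3)) = (2*INR k+3)*(2*INR k+2)*(2*INR k+1)*INR (fact (2*k)).
Proof.
  intro k. replace (2*k+3)%nat with (S (S (S (2*k)))) by lia.
  rewrite !fact_simpl, !mult_INR, !S_INR, mult_INR. simpl. ring.
Qed.

Lemma coef : forall k X x, X = x*x -> X <> 0 ->
  term k x = (-1)^k / INR (fact (2*k)) * X^k
     - 3/(4*X) * ((-1)^(S k) / INR (fact (2 * S k + 1)) * X^(S k)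
                 - (-1)^(S k) / INR (fact (2 * S k + 1)) * (9*X)^(S k)).
Proof.
  intros k X x HX H0. unfold term, A.
  replace (2 * S k + 1)%nat with (2*k+3)%nat by lia.
  rewrite fact3. rewrite Rpow_mult_distr.
  replace (3 ^ (2*k+3)) with (27 * 9^k) by (rewrite pow_add, pow_mult; replace (3^2) with 9 by ring; ring).
  replace (x ^ (2*k)) with (X^k) by (rewrite pow_mult; subst X; f_equal; ring).
  replace ((-1)^(k+1)) with (-(-1)^k) by (rewrite pow_add; simpl; ring).
  simpl pow.
  assert (INR (fact (2*k)) <> 0) by apply INR_fact_neq_0.
  assert (0 <= INR k) by apply pos_INR.
  field. repeat split; try lra.
Qed.

Lemma Un_cv_ext : forall u v l, (forall n, u n = v n) -> Un_cv u l -> Un_cv v l.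
Proof. intros u v l H C e He. destruct (C e He) as [N HN]. exists N. intros n Hn. rewrite <- H. auto. Qed.

Lemma Un_cv_const : forall c, Un_cv (fun _ => c) c.
Proof. intros c e He. exists 0%nat. intros. unfold Rdist. rewrite Rminus_diag, Rabs_R0. lra. Qed.

Lemma Un_cv_shift : forall u l, Un_cv u l -> Un_cv (fun n => u (S n)) l.
Proof. intros u l C e He. destruct (C e He) as [N HN]. exists N. intros n Hn. apply HN. lia. Qed.

Lemma sin_ser y : exists a, sin y = y*a /\ infinite_sum (fun i => sin_n i * (y*y)^i) a.
Proof. unfold sin. destruct (exist_sin (Rsqr y)) as [a Ha]. exists a. split; auto. Qed.

Lemma cos_ser y : exists a, cos y = a /\ infinite_sum (fun i => cos_n i * (y*y)^i) a.
Proof. unfold cos. destruct (exist_cos (Rsqr y)) as [a Ha]. exists a. split; auto. Qed.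

Lemma Fser x : 0 < x -> Un_cv (fun N => sum_f_R0 (fun k => term k x) N) (F x).
Proof.
  intro Hx.
  destruct (cos_ser x) as [ac [Hc Sc]].
  destruct (sin_ser x) as [a1 [H1 S1]].
  destruct (sin_ser (3*x)) as [a3 [H3 S3]].
  set (X := x*x) in *.
  assert (HX0 : X <> 0) by (unfold X; nra).
  replace ((3*x)*(3*x)) with (9*X) in S3 by (unfold X; ring).
  assert (HF : F x = ac - 3/(4*X) * (a1 - a3)).
  { unfold F. rewrite Hc. replace (sin x / x) with a1 by (rewrite H1; field; lra).
    pose proof (sin3 x) as E. rewrite H3, H1 in E.
    assert (E2 : 4*X*a1^3 = 3*a1 - 3*a3).
    { apply Rmult_eq_reg_l with x; [|lra]. unfold X. nra. }
    replace (a1^3) with (4*X*a1^3/(4*X)) by (field; auto).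
    rewrite E2. field. auto. }
  rewrite HF.
  set (c := fun i => sin_n i * X^i - sin_n i * (9*X)^i).
  assert (C1 : Un_cv (fun N => sum_f_R0 c N) (a1 - a3)).
  { apply Un_cv_ext with (fun N => sum_f_R0 (fun i => sin_n i * X^i) N - sum_f_R0 (fun i => sin_n i * (9*X)^i) N).
    - intro n. unfold c. rewrite minus_sum. reflexivity.
    - apply CV_minus; assumption. }
  apply Un_cv_shift in C1.
  assert (C2 : Un_cv (fun N => sum_f_R0 (fun i => c (S i)) N) (a1 - a3)).
  { apply Un_cv_ext with (2 := C1). intro n. rewrite decomp_sum by lia.
    simpl pred. unfold c at 1. simpl pow. ring. }
  assert (C3 := CV_mult _ _ _ _ (Un_cv_const (3/(4*X))) C2).
  assert (C4 := CV_minus _ _ _ _ Sc C3). simpl in C4.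
  apply Un_cv_ext with (2 := C4). intro n.
  rewrite scal_sum, <- minus_sum. apply sum_eq. intros i _.
  rewrite (coef i X x); auto. unfold c, sin_n, cos_n. ring.
Qed.

Definition p (K : R) := 32 * K ^ 3 + 96 * K ^ 2 + 88 * K + 27.

Lemma pow3S : forall k, 3 ^ (2 * S k + 3) = 9 * 3 ^ (2*k+3).
Proof. intro k. replace (2 * S k + 3)%nat with (2 + (2*k+3))%nat by lia. rewrite pow_add. ring. Qed.

Lemma Tbig : forall j, 2 * p (INR (j+2)) < 3 ^ (2*(j+2)+3).
Proof.
  induction j.
  - simpl. unfold p. simpl. lra.
  - replace (S j + 2)%nat with (S (j+2)) by lia. rewrite pow3S, S_INR.
    assert (INR (j+2) >= 2) by (rewrite plus_INR; simpl; pose proof (pos_INR j); lra).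
    set (K := INR (j+2)) in *. unfold p in *.
    nra.
Qed.

Lemma factS2 : forall k, INR (fact (2 * S k + 3)) = (2*INR k+5)*(2*INR k+4)*INR (fact (2*k+3)).
Proof.
  intro k. replace (2 * S k + 3)%nat with (S (S (2*k+3))) by lia.
  rewrite !fact_simpl, !mult_INR, !S_INR, plus_INR, mult_INR. simpl. ring.
Qed.

Lemma A_prop : forall k, (2 <= k)%nat -> 0 < A k /\ 4 * A (S k) < A k.
Proof.
  intros k Hk.
  assert (HT := Tbig (k-2)). replace (k-2+2)%nat with k in HT by lia.
  assert (HK : INR k >= 2) by (apply Rle_ge; replace 2 with (INR 2) by (simpl; ring); apply le_INR; auto).
  assert (Hf : 0 < INR (fact (2*k+3))) by (apply lt_0_INR, lt_O_fact).
  unfold A. rewrite pow3S, factS2, S_INR.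
  set (T := 3 ^ (2*k+3)) in *. set (K := INR k) in *. set (f := INR (fact (2*k+3))) in *.
  unfold p in HT.
  split.
  - apply Rdiv_lt_0_compat; nra.
  - assert (Hy : 72 <= (2*K+5)*(2*K+4)) by nra.
    assert (0 < 32 * (K + 1) ^ 3 + 96 * (K + 1) ^ 2 + 88 * (K + 1) + 27) by nra.
    unfold Rdiv. rewrite Rinv_mult, Rinv_mult.
    set (N := T - 32 * K ^ 3 - 96 * K ^ 2 - 88 * K - 27) in *.
    set (N' := 9 * T - 32 * (K + 1) ^ 3 - 96 * (K + 1) ^ 2 - 88 * (K + 1) - 27).
    set (y := (2*K+5)*(2*K+4)) in *.
    assert (HN : 2 * N > T) by (unfold N; lra).
    assert (0 < 32 * K ^ 3 + 96 * K ^ 2 + 88 * K + 27) by nra.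
    assert (72 * N <= y * N) by (apply Rmult_le_compat_r; lra).
    assert (4 * N' < y * N). { unfold N'. lra. }
    assert (0 < / (4*f)) by (apply Rinv_0_lt_compat; lra).
    assert (0 < y) by lra.
    replace (4 * (N' * (/ 4 * (/ y * / f)))) with (4 * N' / y * / (4*f)) by (field; lra).
    apply Rmult_lt_compat_r; auto.
    apply Rmult_lt_reg_r with y; auto. unfold Rdiv. rewrite Rmult_assoc, Rinv_l by lra. lra.
Qed.

Lemma tg_even u n : tg_alt u (2*n)%nat = u (2*n)%nat.
Proof. unfold tg_alt. rewrite pow_1_even. ring. Qed.
Lemma tg_odd u n : tg_alt u (S (2*n)) = - u (S (2*n))%nat.
Proof. unfold tg_alt. rewrite pow_1_odd. ring. Qed.

Lemma alt_strict u l : (forall n, u (S n) < u n) -> Un_cv u 0 ->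
  Un_cv (fun N => sum_f_R0 (tg_alt u) N) l ->
  forall N, sum_f_R0 (tg_alt u) (S (2*N)%nat) < l < sum_f_R0 (tg_alt u) (2*N)%nat.
Proof.
  intros Hd H0 Hl N.
  assert (Hdec : Un_decreasing u) by (intro n; left; apply Hd).
  destruct (alternated_series_ineq u l (S N) Hdec H0 Hl) as [L1 L2].
  assert (E1 : sum_f_R0 (tg_alt u) (2 * S N)%nat = sum_f_R0 (tg_alt u) (2*N)%nat - u (S (2*N)%nat) + u (2 * S N)%nat).
  { replace (2 * S N)%nat with (S (S (2*N)%nat)) at 1 by lia. rewrite !tech5.
    replace (S (S (2*N)%nat)) with (2 * S N)%nat by lia. rewrite tg_even, tg_odd. ring. }
  assert (E2 : sum_f_R0 (tg_alt u) (S (2 * S N)%nat) = sum_f_R0 (tg_alt u) (S (2*N)%nat) + u (2 * S N)%nat - u (S (2 * S N)%nat)).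
  { rewrite tech5, tg_odd. replace (2 * S N)%nat with (S (S (2*N)%nat)) at 1 by lia. rewrite tech5.
    replace (S (S (2*N)%nat)) with (2 * S N)%nat by lia. rewrite tg_even. ring. }
  pose proof (Hd (2 * S N)%nat). pose proof (Hd (S (2*N)%nat)).
  replace (S (S (2*N)%nat)) with (2 * S N)%nat in * by lia.
  lra.
Qed.

Lemma alt_bound u l : (forall n, u (S n) < u n) -> Un_cv u 0 ->
  Un_cv (fun N => sum_f_R0 (tg_alt u) N) l ->
  Rabs l < u 0%nat /\ forall j, Rabs (l - sum_f_R0 (tg_alt u) j) < u (S j).
Proof.
  intros Hd H0 Hl. pose proof (alt_strict u l Hd H0 Hl) as H.
  split.
  - destruct (H 0%nat) as [A1 A2]. simpl in A1, A2. unfold tg_alt in A1, A2. simpl in A1, A2.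
    pose proof (Hd 0%nat). apply Rabs_def1; lra.
  - intro j. destruct (Nat.Even_or_Odd j) as [[N HN]|[N HN]]; subst j.
    + destruct (H N) as [A1 A2]. rewrite tech5, tg_odd in A1.
      apply Rabs_def1; lra.
    + replace (2*N+1)%nat with (S (2*N)%nat) by lia.
      destruct (H N) as [A1 _]. destruct (H (S N)) as [_ A2].
      replace (2 * S N)%nat with (S (S (2*N)%nat)) in A2 by lia.
      rewrite tech5 in A2. replace (S (S (2*N)%nat)) with (2 * S N)%nat in A2 by lia.
      rewrite tg_even in A2.
      pose proof (Hd (S (2*N)%nat)). replace (S (S (2*N)%nat)) with (2 * S N)%nat in * by lia.
      apply Rabs_def1; lra.
Qed.

Lemma term0 x : term 0 x = 0.
Proof. unfold term, A. simpl. unfold Rdiv. replace (3*(3*(3*1)) - 32*(0*(0*(0*1))) - 96*(0*(0*1)) - 88*0 - 27) with 0 by ring. ring. Qed.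
Lemma term1 x : term 1 x = 0.
Proof. unfold term, A. replace (INR 1) with 1 by reflexivity. unfold Rdiv.
  replace (3 ^ (2 * 1 + 3) - 32 * 1 ^ 3 - 96 * 1 ^ 2 - 88 * 1 - 27) with 0 by (simpl; ring). ring. Qed.

Lemma psum_eq a b x : (1 <= a <= 2)%nat -> psum a b x = sum_f_R0 (fun k => term k x) b.
Proof.
  intro Ha. induction b.
  - simpl. destruct (a <=? 0)%nat; rewrite ?term0; reflexivity.
  - simpl psum. rewrite IHb, tech5. destruct (a <=? S b)%nat eqn:E; [reflexivity|].
    apply Nat.leb_gt in E. assert (b = 0)%nat by lia. subst. rewrite term1. ring.
Qed.

Definition u x j := A (j+2) * x ^ (2*(j+2)).

Lemma x2 x (Hx : 0 < x < PI/2) : x * x < 4.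
Proof. pose proof PI_4. nra. Qed.

Lemma u_pos x (Hx : 0 < x < PI/2) j : 0 < u x j.
Proof. unfold u. apply Rmult_lt_0_compat. apply A_prop; lia. apply pow_lt; lra. Qed.

Lemma u_step x (Hx : 0 < x < PI/2) j : u x (S j) <= (x*x/4) * u x j /\ u x (S j) < u x j.
Proof.
  unfold u. replace (S j + 2)%nat with (S (j+2)) by lia.
  replace (2 * S (j+2))%nat with (S (S (2 * (j+2)))) by lia.
  destruct (A_prop (j+2)) as [P1 P2]; [lia|].
  destruct (A_prop (S (j+2))) as [P3 _]; [lia|].
  assert (0 < x ^ (2*(j+2))) by (apply pow_lt; lra).
  pose proof (x2 x Hx).
  cbn [pow]. set (y := x ^ (2*(j+2))) in *.
  assert (Hxy : 0 < x*x*y) by (apply Rmult_lt_0_compat; nra).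
  split.
  - replace (A (S (j + 2)) * (x * (x * y))) with ((x*x*y) * A (S (j+2))) by ring.
    replace (x * x / 4 * (A (j + 2) * y)) with ((x*x*y) * (A (j+2)/4)) by field.
    apply Rmult_le_compat_l; lra.
  - replace (A (S (j + 2)) * (x * (x * y))) with ((A (S (j+2)) * y) * (x*x)) by ring.
    assert (0 < A (S (j+2)) * y) by (apply Rmult_lt_0_compat; lra).
    apply Rlt_trans with ((A (S (j+2)) * y) * 4). apply Rmult_lt_compat_l; lra. nra.
Qed.

Lemma u_cv x (Hx : 0 < x < PI/2) : Un_cv (u x) 0.
Proof.
  set (q := x*x/4).
  assert (Hq : 0 <= q < 1) by (pose proof (x2 x Hx); unfold q; nra).
  assert (Hb : forall n, u x n <= q ^ n * u x 0%nat).
  { induction n. simpl; lra. destruct (u_step x Hx n) as [H _]. simpl.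
    apply Rle_trans with (q * u x n); [exact H|]. rewrite Rmult_assoc. apply Rmult_le_compat_l; lra. }
  intros e He. assert (Hu0 := u_pos x Hx 0).
  destruct (pow_lt_1_zero q ltac:(rewrite Rabs_right; lra) (e / u x 0%nat) ltac:(apply Rdiv_lt_0_compat; lra)) as [N HN].
  exists N. intros n Hn. specialize (HN n Hn). unfold Rdist. rewrite Rminus_0_r.
  rewrite Rabs_right by (left; apply (u_pos x Hx)). rewrite Rabs_right in HN by (apply Rle_ge, pow_le; lra).
  apply Rle_lt_trans with (q^n * u x 0%nat); auto.
  apply Rmult_lt_reg_r with (/ u x 0%nat). apply Rinv_0_lt_compat; lra.
  rewrite Rmult_assoc, Rinv_r by lra. lra.
Qed.

Lemma sum_shift x N : sum_f_R0 (fun k => term k x) (S (S N)) = - sum_f_R0 (tg_alt (u x)) N.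
Proof.
  induction N.
  - simpl. rewrite term0, term1. unfold tg_alt, u, term. simpl. ring.
  - rewrite tech5, IHN, tech5. unfold tg_alt, u, term.
    replace (S (S (S N))) with (S N + 2)%nat by lia.
    rewrite (pow_add (-1) (S N + 2) 1), (pow_add (-1) (S N) 2). ring.
Qed.

Lemma u_ser x (Hx : 0 < x < PI/2) : Un_cv (fun N => sum_f_R0 (tg_alt (u x)) N) (- F x).
Proof.
  pose proof (Fser x ltac:(lra)) as C.
  apply Un_cv_shift, Un_cv_shift, CV_opp in C.
  apply Un_cv_ext with (2 := C). intro n. unfold opp_seq. rewrite sum_shift. ring.
Qed.


Theorem theorem1 :
  (forall (x : R) (n : nat), 0 < x < PI / 2 -> (1 <= n)%nat ->
     psum 2 (2 * n) x < F x < psum 2 (2 * n + 1) x) /\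
  (forall (x : R) (m : nat), 0 < x < PI / 2 -> (1 <= m)%nat ->
     Rabs (F x - psum 1 m x) < A (m + 1) * x ^ (2 * m + 2)).
Proof.
  split.
  - intros x n Hx Hn.
    destruct (alt_strict (u x) (- F x) (fun j => proj2 (u_step x Hx j)) (u_cv x Hx) (u_ser x Hx) (n-1)%nat) as [L1 L2].
    rewrite !psum_eq by lia.
    replace (2*n+1)%nat with (S (S (S (2*(n-1))))) by lia.
    replace (2*n)%nat with (S (S (2*(n-1)))) by lia.
    rewrite !sum_shift. lra.
  - intros x m Hx Hm.
    destruct (alt_bound (u x) (- F x) (fun j => proj2 (u_step x Hx j)) (u_cv x Hx) (u_ser x Hx)) as [B0 B1].
    rewrite psum_eq by lia.
    destruct (Nat.eq_dec m 1) as [->|Hm2].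
    + simpl sum_f_R0. rewrite term0, term1. unfold u in B0. simpl in B0 |- *.
      rewrite Rabs_Ropp in B0. replace (F x - (0+0)) with (F x) by ring. exact B0.
    + replace m with (S (S (m-2))) by lia. rewrite sum_shift.
      specialize (B1 (m-2)%nat). unfold u in B1.
      replace (S (m - 2) + 2)%nat with (S (S (m-2)) + 1)%nat in B1 by lia.
      replace (2 * (S (S (S (m-2)))))%nat with (2 * S (S (m-2)) + 2)%nat in B1 by lia.
      replace (2 * (S (S (m-2)) + 1))%nat with (2 * S (S (m-2)) + 2)%nat in B1 by lia.
      replace (F x - - sum_f_R0 (tg_alt (u x)) (m - 2)) with (- (- F x - sum_f_R0 (tg_alt (u x)) (m - 2))) by ring.
      rewrite Rabs_Ropp. exact B1.
Qed.
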